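(* Let $G$ be a graph, let $C=a_{1}a_{2}a_{3}a_{1}$ be a triangle of $G$, and let $M_{1},M_{2}$ be two paths in $G$ each with exactly $2$ vertices (i.e. edges). Suppose $C$, $M_{1}$, $M_{2}$ are pairwise vertex-disjoint and $e(V(C),V(M_{1})\cup V(M_{2}))\geq 9$. Then $G[V(C)\cup V(M_{1})\cup V(M_{2})]$ contains vertex-disjoint subgraphs $C'$ and $D$, where $C'$ is a triangle and $D$ has exactly $4$ vertices and at least $4$ edges.
   Context: All graphs are finite, simple and undirected. For disjoint vertex sets $L,M$, $e(L,M)$ is the number of edges of $G$ with one end in $L$ and the other in $M$. For $U\subseteq V(G)$, $G[U]$ is the subgraph induced by $U$. *)

(* Defs.v *)
From mathcomp Require Import all_boot.
Set Implicit Arguments. Unset Strict Implicit. Unset Printing Implicit Defensive.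

Definition simple_graph (T : finType) (e : rel T) :=
  symmetric e /\ irreflexive e.

(* e(L,M): number of edges with one end in L and the other in M
   (L, M disjoint), counted as ordered pairs (x,y), x in L, y in M. *)
Definition e_between (T : finType) (e : rel T) (L M : {set T}) : nat :=
  #|[set p : T * T | (p.1 \in L) && (p.2 \in M) && e p.1 p.2]|.

Definition is_edge_of (T : finType) (e : rel T) (f : {set T}) :=
  exists x y, x != y /\ e x y /\ f = [set x; y].

Definition subgraph_in (T : finType) (e : rel T) (U D : {set T})
  (F : {set {set T}}) :=
  D \subset U /\ forall f, f \in F -> is_edge_of e f /\ f \subset D.

Definition triangle_in (T : finType) (e : rel T) (U K : {set T}) :=
  exists x y z, [/\ K = [set x; y; z], x != y, y != z, x != z &
    [/\ e x y, e y z, e x z & K \subset U]].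

(* Main.v *)
Require Import Defs.
From mathcomp Require Import all_boot.
Set Implicit Arguments. Unset Strict Implicit.

Ltac splitands := repeat match goal with
  | H : is_true (_ && _) |- _ => case/andP: H => ? ?
  | H : is_true true |- _ => clear H end.
Ltac mkeqs := repeat match goal with H : is_true (negb (?u == ?v)) |- _ =>
  let H1 := fresh "E" in let H2 := fresh "E" in
  pose proof (negbTE H) as H1;
  assert (H2 : (v == u) = false) by (rewrite eq_sym; exact (negbTE H)); clear H end.
Ltac orcases := let H := fresh in move=> H; repeat (case/orP: H => H); move/eqP: H => ->.
Ltac simpeq := repeat match goal with H : (_ == _) = false |- _ => rewrite H end.

Lemma setneq (T : finType) (w : T) (A B : {set T}) : w \in A -> w \notin B -> (A == B) = false.
Proof. by move=> HA HB; apply/negbTE/eqP => E; move: HB; rewrite -E HA. Qed.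

Ltac sneq p q r s := first
  [ apply: (setneq (w := p)); rewrite !inE ?eqxx; simpeq; done
  | apply: (setneq (w := q)); rewrite !inE ?eqxx; simpeq; done
  | apply: (setneq (w := r)); rewrite !inE ?eqxx; simpeq; done
  | apply: (setneq (w := s)); rewrite !inE ?eqxx; simpeq; done ].

Lemma card4 (T : finType) (a b c d : T) : uniq [:: a; b; c; d] -> #|[set a; b; c; d]| = 4.
Proof.
move=> Hu; rewrite (_ : [set a; b; c; d] = [set v in [:: a; b; c; d]]).
  by rewrite cardsE; apply/card_uniqP.
by apply/setP => v; rewrite !inE -!orbA ?orbF.
Qed.

Lemma build (T : finType) (e : rel T) (U : {set T}) x y z p q r s p1 r1 p2 r2 :
  simple_graph e -> e x y -> e y z -> e x z -> e p q -> e r s ->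
  uniq [:: x;y;z;p;q;r;s] -> all (fun v => v \in U) [:: x;y;z;p;q;r;s] ->
  p1 \in [:: p;q] -> p2 \in [:: p;q] -> r1 \in [:: r;s] -> r2 \in [:: r;s] ->
  (p1 != p2) || (r1 != r2) -> e p1 r1 -> e p2 r2 ->
  exists (K D : {set T}) (F : {set {set T}}),
    [/\ triangle_in e U K, subgraph_in e U D F, [disjoint K & D],
        #|D| = 4 & 4 <= #|F|].
Proof.
move=> [esym eirr] exy eyz exz epq ers Hu HU.
rewrite /= !inE in Hu HU. rewrite !negb_or in Hu. splitands. mkeqs.
move=> hp1 hp2 hr1 hr2 hne e1 e2.
exists [set x;y;z], [set p;q;r;s], [set [set p;q]; [set r;s]; [set p1;r1]; [set p2;r2]].
move: hp1 hp2 hr1 hr2 hne e1 e2.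
rewrite !inE => /orP[]/eqP-> /orP[]/eqP-> /orP[]/eqP-> /orP[]/eqP->;
  rewrite ?eqxx; simpeq => //= e1 e2; split.

all: try solve [exists x, y, z; split; simpeq => //; split => //; by apply/subsetP => v; rewrite !inE ; orcases].
all: try solve [split; [ by apply/subsetP => v; rewrite !inE ; orcases
   | move=> f; rewrite !inE ; orcases; (split;
     [ match goal with |- is_edge_of _ [set ?a; ?b] => exists a, b end; simpeq; done
     | apply/subsetP => v; rewrite !inE ; orcases; rewrite ?eqxx ?orbT //]) ]].
all: try solve [rewrite disjoints_subset; apply/subsetP => v; rewrite !inE ; orcases; simpeq; done].
all: try solve [rewrite card4 // /= !inE; simpeq; done].
all: rewrite card4 // /= !inE.
all: repeat match goal with |- context[ (?A : {set _}) == ?B ] => rewrite (_ : (A == B) = false); [|sneq p q r s] end.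
all: done.
Qed.
Lemma key (x_a1_b1 : bool) (x_a1_b2 : bool) (x_a1_c1 : bool) (x_a1_c2 : bool) (x_a2_b1 : bool) (x_a2_b2 : bool) (x_a2_c1 : bool) (x_a2_c2 : bool) (x_a3_b1 : bool) (x_a3_b2 : bool) (x_a3_c1 : bool) (x_a3_c2 : bool) :
  9 <= count id [:: x_a1_b1; x_a1_b2; x_a1_c1; x_a1_c2; x_a2_b1; x_a2_b2; x_a2_c1; x_a2_c2; x_a3_b1; x_a3_b2; x_a3_c1; x_a3_c2] ->
  [|| [&& x_a1_b1, x_a1_b2, x_a2_c1 & x_a2_c2],
   [&& x_a1_b1, x_a1_b2, x_a2_c1 & x_a3_c1],
   [&& x_a1_b1, x_a1_b2, x_a2_c1 & x_a3_c2],
   [&& x_a1_b1, x_a1_b2, x_a2_c2 & x_a3_c1],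
   [&& x_a1_b1, x_a1_b2, x_a2_c2 & x_a3_c2],
   [&& x_a1_b1, x_a1_b2, x_a3_c1 & x_a3_c2],
   [&& x_a2_b1, x_a2_b2, x_a1_c1 & x_a1_c2],
   [&& x_a2_b1, x_a2_b2, x_a1_c1 & x_a3_c1],
   [&& x_a2_b1, x_a2_b2, x_a1_c1 & x_a3_c2],
   [&& x_a2_b1, x_a2_b2, x_a1_c2 & x_a3_c1],
   [&& x_a2_b1, x_a2_b2, x_a1_c2 & x_a3_c2],
   [&& x_a2_b1, x_a2_b2, x_a3_c1 & x_a3_c2],
   [&& x_a3_b1, x_a3_b2, x_a1_c1 & x_a1_c2],
   [&& x_a3_b1, x_a3_b2, x_a1_c1 & x_a2_c1],
   [&& x_a3_b1, x_a3_b2, x_a1_c1 & x_a2_c2],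
   [&& x_a3_b1, x_a3_b2, x_a1_c2 & x_a2_c1],
   [&& x_a3_b1, x_a3_b2, x_a1_c2 & x_a2_c2],
   [&& x_a3_b1, x_a3_b2, x_a2_c1 & x_a2_c2],
   [&& x_a1_c1, x_a1_c2, x_a2_b1 & x_a2_b2],
   [&& x_a1_c1, x_a1_c2, x_a2_b1 & x_a3_b1],
   [&& x_a1_c1, x_a1_c2, x_a2_b1 & x_a3_b2],
   [&& x_a1_c1, x_a1_c2, x_a2_b2 & x_a3_b1],
   [&& x_a1_c1, x_a1_c2, x_a2_b2 & x_a3_b2],
   [&& x_a1_c1, x_a1_c2, x_a3_b1 & x_a3_b2],
   [&& x_a2_c1, x_a2_c2, x_a1_b1 & x_a1_b2],
   [&& x_a2_c1, x_a2_c2, x_a1_b1 & x_a3_b1],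
   [&& x_a2_c1, x_a2_c2, x_a1_b1 & x_a3_b2],
   [&& x_a2_c1, x_a2_c2, x_a1_b2 & x_a3_b1],
   [&& x_a2_c1, x_a2_c2, x_a1_b2 & x_a3_b2],
   [&& x_a2_c1, x_a2_c2, x_a3_b1 & x_a3_b2],
   [&& x_a3_c1, x_a3_c2, x_a1_b1 & x_a1_b2],
   [&& x_a3_c1, x_a3_c2, x_a1_b1 & x_a2_b1],
   [&& x_a3_c1, x_a3_c2, x_a1_b1 & x_a2_b2],
   [&& x_a3_c1, x_a3_c2, x_a1_b2 & x_a2_b1],
   [&& x_a3_c1, x_a3_c2, x_a1_b2 & x_a2_b2] |
   [&& x_a3_c1, x_a3_c2, x_a2_b1 & x_a2_b2]].
Proof.
case: x_a1_b1; case: x_a1_b2; case: x_a1_c1; case: x_a1_c2; case: x_a2_b1; case: x_a2_b2; case: x_a2_c1; case: x_a2_c2; case: x_a3_b1; case: x_a3_b2; case: x_a3_c1; case: x_a3_c2; by [].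
Qed.

Ltac solve_side U := try rewrite /U; rewrite /= ?inE ?eqxx ?orbT; simpeq; done.

Theorem lemma5 (T : finType) (e : rel T) (a1 a2 a3 b1 b2 c1 c2 : T) :
  simple_graph e ->
  (* C = a1 a2 a3 a1 is a triangle *)
  e a1 a2 -> e a2 a3 -> e a3 a1 ->
  (* M1 = b1 b2 and M2 = c1 c2 are paths on exactly 2 vertices *)
  e b1 b2 -> e c1 c2 ->
  (* C, M1, M2 pairwise vertex-disjoint (and all vertices distinct) *)
  uniq [:: a1; a2; a3; b1; b2; c1; c2] ->
  9 <= e_between e [set a1; a2; a3] ([set b1; b2] :|: [set c1; c2]) ->
  let U := [set a1; a2; a3; b1; b2; c1; c2] in
  exists (K D : {set T}) (F : {set {set T}}),
    [/\ triangle_in e U K, subgraph_in e U D F, [disjoint K & D],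
        #|D| = 4 & 4 <= #|F|].
Proof.
move=> Hg ea1a2 ea2a3 ea3a1 eb1b2 ec1c2 Hu Hc U.
have ea1a3 : e a1 a3 by case: Hg => esym _; rewrite esym.
have Hc' : 9 <= count id [:: e a1 b1; e a1 b2; e a1 c1; e a1 c2; e a2 b1; e a2 b2;
   e a2 c1; e a2 c2; e a3 b1; e a3 b2; e a3 c1; e a3 c2].
  apply: (leq_trans Hc).
  pose L := [seq (u, w) | u <- [:: a1; a2; a3], w <- [:: b1; b2; c1; c2]].
  apply: (@leq_trans #|[set pr in [seq pr <- L | e pr.1 pr.2]]|).
    apply: subset_leq_card; apply/subsetP => -[u w] H; rewrite in_set mem_filter.
    move: H; rewrite !inE /= => /andP[/andP[hu hw] he]; rewrite he /=.
    move: hu => /orP[/orP[]|] /eqP->; move: hw => /orP[/orP[]|/orP[]] /eqP->;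
      by rewrite eqxx ?orbT.
  by rewrite cardsE (leq_trans (card_size _)) // size_filter.
have := key Hc'.
move: Hu; rewrite /= !inE !negb_or => Hu. splitands. mkeqs. move=> H.
case/orP: H => [H|H].
{ case/and4P: H => h1 h2 h3 h4; apply: (@build T e U a1 b1 b2 a2 a3 c1 c2 a2 c1 a2 c2) => //; solve_side U. }
case/orP: H => [H|H].
{ case/and4P: H => h1 h2 h3 h4; apply: (@build T e U a1 b1 b2 a2 a3 c1 c2 a2 c1 a3 c1) => //; solve_side U. }
case/orP: H => [H|H].
{ case/and4P: H => h1 h2 h3 h4; apply: (@build T e U a1 b1 b2 a2 a3 c1 c2 a2 c1 a3 c2) => //; solve_side U. }
case/orP: H => [H|H].
{ case/and4P: H => h1 h2 h3 h4; apply: (@build T e U a1 b1 b2 a2 a3 c1 c2 a2 c2 a3 c1) => //; solve_side U. }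
case/orP: H => [H|H].
{ case/and4P: H => h1 h2 h3 h4; apply: (@build T e U a1 b1 b2 a2 a3 c1 c2 a2 c2 a3 c2) => //; solve_side U. }
case/orP: H => [H|H].
{ case/and4P: H => h1 h2 h3 h4; apply: (@build T e U a1 b1 b2 a2 a3 c1 c2 a3 c1 a3 c2) => //; solve_side U. }
case/orP: H => [H|H].
{ case/and4P: H => h1 h2 h3 h4; apply: (@build T e U a2 b1 b2 a1 a3 c1 c2 a1 c1 a1 c2) => //; solve_side U. }
case/orP: H => [H|H].
{ case/and4P: H => h1 h2 h3 h4; apply: (@build T e U a2 b1 b2 a1 a3 c1 c2 a1 c1 a3 c1) => //; solve_side U. }
case/orP: H => [H|H].
{ case/and4P: H => h1 h2 h3 h4; apply: (@build T e U a2 b1 b2 a1 a3 c1 c2 a1 c1 a3 c2) => //; solve_side U. }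
case/orP: H => [H|H].
{ case/and4P: H => h1 h2 h3 h4; apply: (@build T e U a2 b1 b2 a1 a3 c1 c2 a1 c2 a3 c1) => //; solve_side U. }
case/orP: H => [H|H].
{ case/and4P: H => h1 h2 h3 h4; apply: (@build T e U a2 b1 b2 a1 a3 c1 c2 a1 c2 a3 c2) => //; solve_side U. }
case/orP: H => [H|H].
{ case/and4P: H => h1 h2 h3 h4; apply: (@build T e U a2 b1 b2 a1 a3 c1 c2 a3 c1 a3 c2) => //; solve_side U. }
case/orP: H => [H|H].
{ case/and4P: H => h1 h2 h3 h4; apply: (@build T e U a3 b1 b2 a1 a2 c1 c2 a1 c1 a1 c2) => //; solve_side U. }
case/orP: H => [H|H].
{ case/and4P: H => h1 h2 h3 h4; apply: (@build T e U a3 b1 b2 a1 a2 c1 c2 a1 c1 a2 c1) => //; solve_side U. }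
case/orP: H => [H|H].
{ case/and4P: H => h1 h2 h3 h4; apply: (@build T e U a3 b1 b2 a1 a2 c1 c2 a1 c1 a2 c2) => //; solve_side U. }
case/orP: H => [H|H].
{ case/and4P: H => h1 h2 h3 h4; apply: (@build T e U a3 b1 b2 a1 a2 c1 c2 a1 c2 a2 c1) => //; solve_side U. }
case/orP: H => [H|H].
{ case/and4P: H => h1 h2 h3 h4; apply: (@build T e U a3 b1 b2 a1 a2 c1 c2 a1 c2 a2 c2) => //; solve_side U. }
case/orP: H => [H|H].
{ case/and4P: H => h1 h2 h3 h4; apply: (@build T e U a3 b1 b2 a1 a2 c1 c2 a2 c1 a2 c2) => //; solve_side U. }
case/orP: H => [H|H].
{ case/and4P: H => h1 h2 h3 h4; apply: (@build T e U a1 c1 c2 a2 a3 b1 b2 a2 b1 a2 b2) => //; solve_side U. }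
case/orP: H => [H|H].
{ case/and4P: H => h1 h2 h3 h4; apply: (@build T e U a1 c1 c2 a2 a3 b1 b2 a2 b1 a3 b1) => //; solve_side U. }
case/orP: H => [H|H].
{ case/and4P: H => h1 h2 h3 h4; apply: (@build T e U a1 c1 c2 a2 a3 b1 b2 a2 b1 a3 b2) => //; solve_side U. }
case/orP: H => [H|H].
{ case/and4P: H => h1 h2 h3 h4; apply: (@build T e U a1 c1 c2 a2 a3 b1 b2 a2 b2 a3 b1) => //; solve_side U. }
case/orP: H => [H|H].
{ case/and4P: H => h1 h2 h3 h4; apply: (@build T e U a1 c1 c2 a2 a3 b1 b2 a2 b2 a3 b2) => //; solve_side U. }
case/orP: H => [H|H].
{ case/and4P: H => h1 h2 h3 h4; apply: (@build T e U a1 c1 c2 a2 a3 b1 b2 a3 b1 a3 b2) => //; solve_side U. }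
case/orP: H => [H|H].
{ case/and4P: H => h1 h2 h3 h4; apply: (@build T e U a2 c1 c2 a1 a3 b1 b2 a1 b1 a1 b2) => //; solve_side U. }
case/orP: H => [H|H].
{ case/and4P: H => h1 h2 h3 h4; apply: (@build T e U a2 c1 c2 a1 a3 b1 b2 a1 b1 a3 b1) => //; solve_side U. }
case/orP: H => [H|H].
{ case/and4P: H => h1 h2 h3 h4; apply: (@build T e U a2 c1 c2 a1 a3 b1 b2 a1 b1 a3 b2) => //; solve_side U. }
case/orP: H => [H|H].
{ case/and4P: H => h1 h2 h3 h4; apply: (@build T e U a2 c1 c2 a1 a3 b1 b2 a1 b2 a3 b1) => //; solve_side U. }
case/orP: H => [H|H].
{ case/and4P: H => h1 h2 h3 h4; apply: (@build T e U a2 c1 c2 a1 a3 b1 b2 a1 b2 a3 b2) => //; solve_side U. }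
case/orP: H => [H|H].
{ case/and4P: H => h1 h2 h3 h4; apply: (@build T e U a2 c1 c2 a1 a3 b1 b2 a3 b1 a3 b2) => //; solve_side U. }
case/orP: H => [H|H].
{ case/and4P: H => h1 h2 h3 h4; apply: (@build T e U a3 c1 c2 a1 a2 b1 b2 a1 b1 a1 b2) => //; solve_side U. }
case/orP: H => [H|H].
{ case/and4P: H => h1 h2 h3 h4; apply: (@build T e U a3 c1 c2 a1 a2 b1 b2 a1 b1 a2 b1) => //; solve_side U. }
case/orP: H => [H|H].
{ case/and4P: H => h1 h2 h3 h4; apply: (@build T e U a3 c1 c2 a1 a2 b1 b2 a1 b1 a2 b2) => //; solve_side U. }
case/orP: H => [H|H].
{ case/and4P: H => h1 h2 h3 h4; apply: (@build T e U a3 c1 c2 a1 a2 b1 b2 a1 b2 a2 b1) => //; solve_side U. }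
case/orP: H => [H|H].
{ case/and4P: H => h1 h2 h3 h4; apply: (@build T e U a3 c1 c2 a1 a2 b1 b2 a1 b2 a2 b2) => //; solve_side U. }
{ case/and4P: H => h1 h2 h3 h4; apply: (@build T e U a3 c1 c2 a1 a2 b1 b2 a2 b1 a2 b2) => //; solve_side U. }
Qed.
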